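(* Let $A$ be the set of cyclic Carlitz compositions. Then \[ \sum_{W\in A}x^{\mathrm{sum}(W)}=\frac{\sum_{i=1}^\infty\frac{x^i}{(1+x^i)^2}}{1-\sum_{i=1}^\infty\frac{x^i}{1+x^i}}+\sum_{i=1}^\infty\frac{x^{2i}}{1+x^i}. \]
   Context: A composition is a nonempty finite sequence $W=(c_1,\ldots,c_l)$ of positive integers, with $\mathrm{sum}(W)=c_1+\cdots+c_l$. It is a Carlitz composition if no two adjacent parts are equal, and a cyclic Carlitz composition if moreover, when $l\ge2$, its first and last parts are not equal (equivalently, every cyclic rotation of it has no two adjacent equal parts); compositions with a single part are included. *)

(* Defs.v *)
From mathcomp Require Import all_boot.

Set Implicit Arguments.
Unset Strict Implicit.

Definition is_composition (W : seq nat) : bool :=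
  (W != [::]) && all (fun c => 0 < c) W.

Definition csum (W : seq nat) : nat := sumn W.

Definition carlitz (W : seq nat) : bool :=
  sorted (fun a b => a != b) W.

(* Cyclic Carlitz composition: Carlitz, and if it has at least two parts,
   first and last parts differ. Single-part compositions are included. *)
Definition cyclic_carlitz (W : seq nat) : bool :=
  [&& is_composition W, carlitz W &
      (1 < size W) ==> (head 0 W != last 0 W)].

Fixpoint seqs_len (k m : nat) : seq (seq nat) :=
  match k with
  | 0 => [:: [::]]
  | k'.+1 => [seq a :: s | a <- iota 1 m, s <- seqs_len k' m]
  end.

(* The (duplicate-free) list of all compositions of n: a composition of n
   has at most n parts, each in {1,...,n}. *)
Definition compositions_of (n : nat) : seq (seq nat) :=
  undup [seq W <- flatten [seq seqs_len k n | k <- iota 1 n]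
        | is_composition W && (csum W == n)].

Definition cc_count (n : nat) : nat :=
  count cyclic_carlitz (compositions_of n).

From Stdlib Require Import Reals.
From Coquelicot Require Import Coquelicot.

Definition cc_gf_term (x : R) (n : nat) : R := (INR (cc_count n) * x ^ n)%R.

(* Main.v *)
Require Import Defs.
From mathcomp Require Import all_boot zify.
Set Implicit Arguments. Unset Strict Implicit.

Fixpoint compsF (k n : nat) : seq (seq nat) :=
  match k with
  | 0 => if n == 0 then [:: [::]] else [::]
  | k'.+1 => if n == 0 then [:: [::]] else
      [seq a :: w | a <- iota 1 n, w <- compsF k' (n - a)]
  end.
Definition comps n := compsF n n.
Definition posw (w : seq nat) := all (fun c => 0 < c) w.

Lemma posw_nil w : posw w -> sumn w = 0 -> w = [::].
Proof. case: w => //= a w /andP[a0 _]; move: a0; case: a => //. Qed.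

Lemma mem_compsF k n w : n <= k -> (w \in compsF k n) = posw w && (sumn w == n).
Proof.
elim: k n w => [|k IH] n w.
  rewrite leqn0 => /eqP -> /=; rewrite inE.
  apply/eqP/andP => [->//|[P S]]; apply: posw_nil => //; exact/eqP.
move=> Hn /=; case: eqP => [->|/eqP n0].
  rewrite inE; apply/eqP/andP => [->//|[P S]]; apply: posw_nil => //; exact/eqP.
apply/allpairsPdep/andP.
  move=> [a [v [Ha Hv ->]]]; move: Ha; rewrite mem_iota => /andP[a1 an].
  rewrite add1n ltnS in an.
  move: Hv; rewrite IH; last first. move: a1 Hn; clear.  case: a => // a _. lia.
  move=> /andP[Pv /eqP Sv] /=; rewrite /posw /= a1; split=> //.
  by rewrite Sv subnKC.
case: w => [|a v] [P S]; first by rewrite eq_sym in S; rewrite /= S in n0.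
move: P; rewrite /posw /= => /andP[a1 Pv].
move/eqP: S => S.
exists a, v; split=> //.
  rewrite mem_iota a1 add1n ltnS -S; exact: leq_addr.
rewrite IH; first by rewrite /posw Pv -S addKn eqxx.
have S2 : a + sumn v = n by []. move: a1 S2 Hn; clear; case: a => // a _; lia.
Qed.

Lemma uniq_compsF k n : uniq (compsF k n).
Proof.
elim: k n => [|k IH] n /=; first by case: (n == 0).
case: (n == 0) => //.
apply: allpairs_uniq_dep; first exact: iota_uniq.
  by move=> a _; apply: IH.
move=> [a v] [b u] _ _ /= [-> ->] //.
Qed.

Lemma perm_compsF k n : n <= k -> perm_eq (compsF k n) (comps n).
Proof.
move=> Hn; apply: uniq_perm; try exact: uniq_compsF.
by move=> w; rewrite mem_compsF // mem_compsF.
Qed.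

Lemma count_compsF P k n : n <= k -> count P (compsF k n) = count P (comps n).
Proof. by move=> Hn; apply/permP; apply: perm_compsF. Qed.

Lemma mem_comps n w : (w \in comps n) = posw w && (sumn w == n).
Proof. exact: mem_compsF. Qed.

Lemma comps0 : comps 0 = [:: [::]].
Proof. by []. Qed.

Lemma count_cons P n : 0 < n ->
  count P (comps n) = \sum_(a < n) count (fun w => P (a.+1 :: w)) (comps (n - a.+1)).
Proof.
case: n => // n _.
have -> : comps n.+1 = [seq a :: w | a <- iota 1 n.+1, w <- compsF n (n.+1 - a)] by [].
rewrite count_flatten -map_comp sumnE big_map -(addn0 1) iotaDl big_map (big_nth 0) size_iota big_mkord.
apply: eq_bigr => i _; rewrite nth_iota // add0n add1n /= count_map.
rewrite count_compsF //; rewrite leq_subLR; exact: leq_addl.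
Qed.

Lemma count_rev P n : count P (comps n) = count (fun w => P (rev w)) (comps n).
Proof.
rewrite -(count_map rev P); apply/permP; apply: uniq_perm.
- exact: uniq_compsF.
- rewrite map_inj_uniq; [exact: uniq_compsF|exact: inv_inj revK].
move=> w; apply/idP/mapP => [Hw|[u Hu ->]].
  by exists (rev w); rewrite ?revK // mem_comps /posw all_rev sumn_rev -/(posw w) -mem_comps.
by move: Hu; rewrite !mem_comps /posw all_rev sumn_rev.
Qed.

Lemma count_rcons P n : 0 < n ->
  count P (comps n) = \sum_(a < n) count (fun w => P (rcons w a.+1)) (comps (n - a.+1)).
Proof.
move=> n0; rewrite count_rev count_cons //; apply: eq_bigr => a _.
rewrite count_rev; apply: eq_count => w /=; by rewrite rev_cons revK.
Qed.

Definition neqr : rel nat := fun x y => x != y.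
Definition Bt m a := count (path neqr a) (comps m).
Definition Cn m := count (fun w => (w != [::]) && sorted neqr w) (comps m).
Definition Dt m a := count (fun w => path neqr a w && (last a w != a)) (comps m).

Lemma sum_delta m k (F : nat -> nat) :
  \sum_(b < m) (if (b : nat) == k then F b else 0) = if k < m then F k else 0.
Proof.
elim: m => [|m IH]; first by rewrite big_ord0; case: k.
rewrite big_ord_recr /= IH; case: (ltngtP k m) => H.
- by rewrite ltnS ltnW // addn0.
- by rewrite ltnS leqNgt H.
- by rewrite H ltnSn.
Qed.

Lemma count_split T (p q : pred T) s :
  count p s = count (fun x => p x && q x) s + count (fun x => p x && ~~ q x) s.
Proof. elim: s => //= x s ->; case: (p x); case: (q x) => /=; lia. Qed.

Lemma count_nil_comps m : count (pred1 [::]) (comps m) = (m == 0).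
Proof. by rewrite count_uniq_mem ?uniq_compsF // mem_comps /posw /= eq_sym. Qed.

Lemma size_comps n : size (comps n) <= 2 ^ n.
Proof.
elim: n {-2}n (leqnn n) => [|N IH] n Hn.
  by move: Hn; rewrite leqn0 => /eqP ->.
case: n Hn => [|n] Hn; first by [].
rewrite -count_predT count_cons //.
have H : forall k, k <= n.+1 -> \sum_(a < k) 2 ^ (k - a.+1) <= 2 ^ k.
  elim=> [|k IHk] Hk; first by rewrite big_ord0.
  rewrite big_ord_recl subSS subn0 expnS mul2n -addnn leq_add2l.
  apply: leq_trans (IHk (ltnW Hk)); apply: eq_leq; apply: eq_bigr => i _.
  by rewrite lift0 subSS.
apply: leq_trans (H _ (leqnn _)); apply: leq_sum => i _.
rewrite count_predT; apply: IH; move: Hn (ltn_ord i); lia.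
Qed.

Lemma count_comps_le P m : count P (comps m) <= 2 ^ m.
Proof. exact: leq_trans (count_size _ _) (size_comps m). Qed.

Lemma Cn0 : Cn 0 = 0. Proof. by []. Qed.

Lemma rec1 m : Cn m = \sum_(b < m) Bt (m - b.+1) b.+1.
Proof.
case: m => [|m]; first by rewrite big_ord0.
rewrite /Cn count_cons //; apply: eq_bigr => b _; by [].
Qed.

Lemma rec2 m a : 0 < a ->
  Bt m a + (if a <= m then Bt (m - a) a else 0) = (m == 0) + Cn m.
Proof.
case: a => // a _.
case: m => [|m]; first by [].
rewrite rec1 /Bt count_cons //.
have E : forall b : 'I_m.+1, count (path neqr b.+1) (comps (m.+1 - b.+1)) =
   count (fun w => path neqr a.+1 (b.+1 :: w)) (comps (m.+1 - b.+1)) +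
   (if (b : nat) == a then count (path neqr a.+1) (comps (m.+1 - a.+1)) else 0).
  move=> b; rewrite (count_split _ (fun _ => a.+1 != b.+1)).
  congr (_ + _).
    by apply: eq_count => w /=; rewrite andbC.
  case: (eqVneq (b:nat) a) => [Hb|Hb].
    by rewrite Hb eqxx; apply: eq_count => w /=; rewrite andbT.
  rewrite (@eq_count _ _ pred0) ?count_pred0 // => w /=.
  by rewrite eqSS eq_sym Hb andbF.
rewrite (eq_bigr _ (fun b _ => E b)) big_split /= (sum_delta m.+1 a (fun _ => count (path neqr a.+1) (comps (m.+1 - a.+1)))) add0n.
by rewrite ltnS.
Qed.

Lemma rec3 m a : 0 < a ->
  Dt m a + (if a <= m then Dt (m - a) a else 0) + (m == 0) = Bt m a.
Proof.
case: a => // a _.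
rewrite /Bt (count_split _ (fun w => last a.+1 w != a.+1)) -/(Dt m a.+1) -addnA.
congr (_ + _).
case: m => [|m]; first by rewrite /comps /= eqxx.
rewrite count_rcons // addn0.
rewrite (eq_bigr (fun b : 'I_m.+1 => if (b:nat) == a then Dt (m.+1 - a.+1) a.+1 else 0)).
  by rewrite (sum_delta m.+1 a (fun _ => Dt (m.+1 - a.+1) a.+1)) ltnS.
move=> b _; case: eqP => [->|/eqP Hb].
  apply: eq_count => v /=; by rewrite rcons_path last_rcons eqxx negbK andbT.
rewrite (@eq_count _ _ pred0) ?count_pred0 // => w /=.
by rewrite last_rcons negbK eqSS (negbTE Hb) andbF.
Qed.

Lemma mem_seqs_len k m s :
  (s \in seqs_len k m) = (size s == k) && all (fun a => 0 < a <= m) s.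
Proof.
elim: k s => [|k IH] s /=.
  by rewrite inE; case: s.
apply/allpairsPdep/andP.
  move=> [a [v [Ha Hv ->]]]; rewrite mem_iota in Ha; rewrite IH in Hv.
  case/andP: Hv => /eqP Hs Hv.
  rewrite /= Hs eqxx Hv andbT; split=> //; move: Ha; lia.
case: s => [|a v] /= [Hs]; first by []. case/andP => Ha Hv.
exists a, v; rewrite IH Hv -(eqSS (size v)) Hs; split=> //.
rewrite mem_iota; move: Ha; lia.
Qed.

Lemma size_le_sumn w : posw w -> size w <= sumn w.
Proof. elim: w => //= a w IH /andP[Ha Hw]; move: (IH Hw); lia. Qed.

Lemma mem_le_sumn w x : x \in w -> x <= sumn w.
Proof.
elim: w => //= a w IH; rewrite inE => /orP[/eqP->|/IH]; lia.
Qed.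

Lemma mem_compositions_of n w :
  (w \in compositions_of n) = (w != [::]) && (w \in comps n).
Proof.
rewrite /compositions_of mem_undup mem_filter mem_comps /is_composition /csum.
apply/andP/andP.
  by move=> [/andP[/andP[H1 Hp] H2] _]; split=> //; rewrite H2 andbT.
move=> [Hne /andP[Hp /eqP Hs]]; rewrite Hne -Hs eqxx andbT; split; first exact: Hp.
apply/flattenP; exists (seqs_len (size w) (sumn w)).
  apply/mapP; exists (size w); last by []. rewrite mem_iota add1n ltnS size_le_sumn // andbT.
  by case: w Hne {Hp Hs}.
rewrite mem_seqs_len eqxx /=; apply/allP => x Hx.
move/allP: Hp => /(_ x Hx) ->; exact: mem_le_sumn.
Qed.

Lemma count_compositions_of P n : ~~ P [::] ->
  count P (compositions_of n) = count P (comps n).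
Proof.
move=> HP.
have -> : count P (compositions_of n) = count P [seq w <- comps n | w != [::]].
  apply/permP; apply: uniq_perm; [exact: undup_uniq|exact: filter_uniq (uniq_compsF _ _)|].
  by move=> w; rewrite mem_compositions_of mem_filter.
rewrite count_filter; apply: eq_count => w /=; case: w => /=; [by rewrite (negbTE HP) | by move=> *; rewrite andbT].
Qed.

Lemma cc_count_eq n :
  cc_count n = \sum_(a < n) ((n - a.+1 == 0) + Dt (n - a.+1) a.+1).
Proof.
rewrite /cc_count count_compositions_of //.
case: n => [|n]; first by rewrite big_ord0.
rewrite count_cons //; apply: eq_bigr => a _.
set m := n.+1 - a.+1.
rewrite -count_nil_comps /Dt -count_predUI.
have -> : count (predI (pred1 [::]) (fun w => path neqr a.+1 w && (last a.+1 w != a.+1))) (comps m) = 0.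
  rewrite (@eq_count _ _ pred0) ?count_pred0 // => w /=.
  by case: w => //=; rewrite eqxx.
rewrite addn0; apply: eq_in_count => w; rewrite mem_comps => /andP[Hp _].
rewrite /cyclic_carlitz /is_composition /= /carlitz /=.
case: w Hp => [|b w] //= Hp. move: Hp; rewrite /posw /neqr => ->; by rewrite eq_sym (eq_sym (last b w)) andbA.
Qed.

From Stdlib Require Import Reals Lra FunctionalExtensionality.
From Coquelicot Require Import Coquelicot.
Open Scope R_scope.

Lemma INR_addn (a b : nat) : INR (addn a b) = INR a + INR b.
Proof. exact (plus_INR a b). Qed.

Lemma INR_expn2 (m : nat) : INR (expn 2 m) = 2 ^ m.
Proof.
elim: m => [|m IH] //; rewrite expnS.
change (INR (muln 2 (expn 2 m))) with (INR (Nat.mul 2 (expn 2 m))).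
rewrite mult_INR IH /=; lra.
Qed.

Lemma pow_abs_bound (x : R) (m : nat) : Rabs x < /16 -> 4 ^ m * Rabs x ^ m <= (/4) ^ m.
Proof.
move=> Hx; rewrite -Rpow_mult_distr; apply pow_incr; split.
- apply Rmult_le_pos; [lra| apply Rabs_pos].
- lra.
Qed.

Lemma norm_R (y : R) : norm y = Rabs y.
Proof. by []. Qed.

Lemma ex_PS (c : nat -> R) (A x : R) :
  (forall m, Rabs (c m) <= A * 4 ^ m) -> Rabs x < /16 ->
  ex_series (fun m => c m * x ^ m).
Proof.
move=> Hc Hx.
have A0 : 0 <= A by have := Hc 0%nat; have := Rabs_pos (c 0%nat); simpl; lra.
apply: (ex_series_le _ (fun m => A * (/4) ^ m)).
  move=> m; rewrite norm_R Rabs_mult -RPow_abs.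
  apply: Rle_trans (Rmult_le_compat_r _ _ _ (pow_le _ _ (Rabs_pos x)) (Hc m)) _.
  rewrite Rmult_assoc; apply Rmult_le_compat_l => //; exact: pow_abs_bound.
apply: (ex_series_scal_l A); apply ex_series_geom; rewrite Rabs_pos_eq; lra.
Qed.

Lemma PS_shift (c : nat -> R) (k : nat) (x : R) :
  Series (fun m => (if (k <= m)%nat then c (m - k)%nat else 0) * x ^ m)
  = x ^ k * Series (fun m => c m * x ^ m).
Proof.
rewrite (Series_incr_n_aux _ k).
  rewrite -Series_scal_l; apply Series_ext => n.
  rewrite leq_addr addKn pow_add; ring.
move=> m /ltP Hm; rewrite leqNgt Hm /=; ring.
Qed.

Lemma is_series_delta0 (x : R) :
  is_series (fun m => (if (m == 0)%nat then 1 else 0) * x ^ m) 1.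
Proof.
suff H : is_lim_seq (sum_n (fun m => (if (m == 0)%nat then 1 else 0) * x ^ m)) 1 by exact H.
apply: (is_lim_seq_ext (fun _ => 1)); last exact: is_lim_seq_const.
elim=> [|n IH]; first by rewrite sum_O /=; ring.
rewrite sum_Sn -IH /=; rewrite /plus /=; ring.
Qed.

Lemma series_bound (a b : nat -> R) (l lb : R) :
  is_series a l -> is_series b lb -> (forall n, Rabs (a n) <= b n) -> Rabs l <= lb.
Proof.
move=> Ha Hb H.
have Eb : ex_series b by exists lb.
have Ea : ex_series (fun n => Rabs (a n)).
  apply: (ex_series_le _ b) => // n; rewrite norm_R Rabs_Rabsolu; exact: H.
rewrite -(is_series_unique _ _ Ha) -(is_series_unique _ _ Hb).
apply: Rle_trans (Series_Rabs _ Ea) _.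
apply: Series_le => // n; split; [exact: Rabs_pos| exact: H].
Qed.

Lemma half_pow_le (N n : nat) : (N <= n)%nat -> (/2) ^ n <= (/2) ^ N.
Proof.
move=> /subnKC <-; elim: (n - N)%nat => [|k IH]; first by rewrite addn0; lra.
rewrite addnS /=; have : 0 <= (/2) ^ (N + k) by apply: pow_le; lra. lra.
Qed.

Lemma sum_n_mono (f : nat -> R) (N M : nat) : (forall a, 0 <= f a) -> (N <= M)%nat ->
  sum_n f N <= sum_n f M.
Proof.
move=> Hf /subnKC <-; elim: (M - N)%nat => [|k IH]; first by rewrite addn0; lra.
rewrite addnS sum_Sn /plus /=; have := Hf (N + k).+1; lra.
Qed.

Lemma sum_n_nonneg (f : nat -> R) (N : nat) : (forall a, 0 <= f a) -> 0 <= sum_n f N.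
Proof.
move=> Hf; elim: N => [|N IH]; first by rewrite sum_O.
rewrite sum_Sn /plus /=; have := Hf N.+1; lra.
Qed.

Lemma sum_n_bound (f : nat -> R) (B : R) (N : nat) : (forall a, f a <= B) ->
  sum_n f N <= INR N.+1 * B.
Proof.
move=> Hf; elim: N => [|N IH]; first by rewrite sum_O /=; have := Hf 0%nat; lra.
rewrite sum_Sn S_INR; change (plus (sum_n f N) (f N.+1)) with (sum_n f N + f N.+1); have := Hf N.+1; nra.
Qed.

Lemma INR_le_pow2 (n : nat) : INR n.+1 <= 2 ^ n.
Proof.
elim: n => [|n IH]; first by simpl; lra.
rewrite S_INR; change (2 ^ n.+1) with (2 * 2 ^ n); have := pow_R1_Rle 2 n; lra.
Qed.

Lemma sum_n_tail (f : nat -> R) (n N : nat) : (n <= N)%nat ->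
  (forall a, (n < a)%nat -> f a = 0) -> sum_n f N = sum_n f n.
Proof.
move=> /subnKC <- Hf; elim: (N - n)%nat => [|k IH]; first by rewrite addn0.
by rewrite addnS sum_Sn IH Hf ?ltnS ?leq_addr // /plus /=; ring.
Qed.

Lemma INR_sum_ord (f : nat -> nat) (n : nat) :
  INR (\sum_(a < n) f a)%nat = sum_n (fun a => if (a < n)%nat then INR (f a) else 0) n.
Proof.
have H : forall M, (M <= n)%nat ->
  sum_n (fun a => if (a < n)%nat then INR (f a) else 0) M = INR (\sum_(a < M.+1) (if (a < n)%nat then f a else 0))%nat.
  elim=> [|M IH] HM.
    by rewrite sum_O big_ord_recr big_ord0 /=; case: (0 < n)%nat.
  rewrite sum_Sn IH ?(ltnW HM) // [in RHS]big_ord_recr /= INR_addn.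
  change (plus ?a ?b) with (a + b).
  by case: (M.+1 < n)%nat => /=; lra.
rewrite H // -big_mkcond /= (big_ord_widen_cond _ (fun a => true) _ (leqnSn n)).
by apply: f_equal; apply: eq_bigl => a.
Qed.

Lemma ps_interchange (c : nat -> nat -> nat) (x : R) :
  (forall m a, INR (c m a) <= 2 * 2 ^ m) -> Rabs x < /16 ->
  is_series (fun a => x ^ a.+1 * Series (fun m => INR (c m a.+1) * x ^ m))
            (Series (fun n => INR (\sum_(a < n) c (n - a.+1)%nat a.+1)%nat * x ^ n)).
Proof.
move=> Hc Hx.
pose e a n := if (a < n)%nat then INR (c (n - a.+1)%nat a.+1) else 0.
have e0 : forall a n, 0 <= e a n.
  by move=> a n; rewrite /e; case: (a < n)%nat; [apply: pos_INR | lra].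
have eB : forall a n, e a n <= 2 * 2 ^ n.
  move=> a n; rewrite /e; case: ifP => H; last by have := pow_le 2 n; lra.
  apply: Rle_trans (Hc _ _) _; apply Rmult_le_compat_l; first lra.
  apply: Rle_pow; [lra| apply/leP; exact: leq_subr].
have p2p4 : forall n, 2 * 2 ^ n <= 2 * 4 ^ n.
  move=> n; apply Rmult_le_compat_l; first lra; apply pow_incr; lra.
pose T a := x ^ a.+1 * Series (fun m => INR (c m a.+1) * x ^ m).
have HT : forall a, is_series (fun n => e a n * x ^ n) (T a).
  move=> a; rewrite /T -PS_shift.
  apply: Series_correct; apply: (ex_PS (A := 2)) => // n.
  rewrite Rabs_pos_eq //; exact: Rle_trans (eB a n) (p2p4 n).
have HTN : forall N, is_series (fun n => sum_n (fun a => e a n) N * x ^ n) (sum_n T N).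
  elim=> [|N IH].
    rewrite sum_O; apply: is_series_ext (HT 0%nat) => n; by rewrite sum_O.
  rewrite sum_Sn; apply: (is_series_ext _ _ _ _ (is_series_plus _ _ _ _ IH (HT N.+1))).
  move=> n; rewrite sum_Sn /plus /=; ring.
pose d n := sum_n (fun a => e a n) n.
have dE : forall n, INR (\sum_(a < n) c (n - a.+1)%nat a.+1)%nat = d n.
  by move=> n; rewrite (INR_sum_ord (fun a => c (n - a.+1)%nat a.+1)).
have dB : forall n, d n <= 2 * 4 ^ n.
  move=> n; apply: Rle_trans (sum_n_bound (B := 2 * 2 ^ n) _ (eB ^~ n)) _.
  have := INR_le_pow2 n.
  have -> : 4 ^ n = 2 ^ n * 2 ^ n by rewrite -Rpow_mult_distr; f_equal; lra.
  have : 0 <= 2 ^ n by apply: pow_le; lra.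
  move=> H1 H2; nra.
have HD : is_series (fun n => d n * x ^ n) (Series (fun n => d n * x ^ n)).
  apply: Series_correct; apply: (ex_PS (A := 2)) => // n.
  by rewrite Rabs_pos_eq //; apply: sum_n_nonneg.
have DE : Series (fun n => INR (\sum_(a < n) c (n - a.+1)%nat a.+1)%nat * x ^ n) =
          Series (fun n => d n * x ^ n) by apply: Series_ext => n; rewrite dE.
rewrite DE; set D := Series _ in HD *.
have Bound : forall N, Rabs (D - sum_n T N) <= 4 * (/2) ^ N.
  move=> N.
  have H1 := is_series_minus _ _ _ _ HD (HTN N).
  apply: (series_bound H1 (b := fun n => 2 * (/2) ^ N * (/2) ^ n)).
    have -> : 4 * (/2) ^ N = 2 * (/2) ^ N * / (1 - /2) by field.
    apply: (is_series_scal_l (2 * (/2) ^ N)); apply: is_series_geom.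
    rewrite Rabs_pos_eq; lra.
  move=> n; change (plus ?a (opp ?b)) with (a - b).
  have hN : 0 <= (/2) ^ N by apply: pow_le; lra.
  have hn : 0 <= (/2) ^ n by apply: pow_le; lra.
  case: (leqP n N) => HnN.
    rewrite /d (sum_n_tail (n := n)) //; last first.
      by move=> a Ha; rewrite /e ltnNge (ltnW Ha).
    rewrite Rminus_diag Rabs_R0; nra.
  rewrite -Rmult_minus_distr_r Rabs_mult -RPow_abs.
  have s1 : 0 <= sum_n (fun a => e a n) N by apply: sum_n_nonneg.
  have s2 : sum_n (fun a => e a n) N <= d n by apply: sum_n_mono => //; exact: ltnW.
  rewrite Rabs_pos_eq; last lra.
  have := dB n; have := pow_abs_bound n Hx.
  have -> : (/4) ^ n = (/2) ^ n * (/2) ^ n by rewrite -Rpow_mult_distr; f_equal; lra.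
  have := half_pow_le (ltnW HnN).
  have : 0 <= Rabs x ^ n by apply: pow_le; apply: Rabs_pos.
  have : 0 <= 4 ^ n by apply: pow_le; lra.
  move=> q1 q2 q3 q4 q5.
  apply: (@Rle_trans _ (d n * Rabs x ^ n)).
    apply: Rmult_le_compat_r => //; lra.
  apply: (@Rle_trans _ (2 * 4 ^ n * Rabs x ^ n)); first by apply: Rmult_le_compat_r => //.
  nra.
suff H : is_lim_seq (sum_n T) D by exact H.
have G : is_lim_seq (fun N => 4 * (/2) ^ N) 0.
  have := is_lim_seq_scal_l _ 4 _ (is_lim_seq_geom (/2) _).
  rewrite /= Rmult_0_r; apply; rewrite Rabs_pos_eq; lra.
apply: (is_lim_seq_le_le (fun N => D - 4 * (/2) ^ N) _ (fun N => D + 4 * (/2) ^ N)).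
- move=> N; have := Bound N; move/Rabs_le_between'; lra.
- have := is_lim_seq_minus' _ _ _ _ (is_lim_seq_const D) G; by rewrite Rminus_0_r.
- have := is_lim_seq_plus' _ _ _ _ (is_lim_seq_const D) G; by rewrite Rplus_0_r.
Qed.

Lemma INR_if (b : bool) (u : nat) : INR (if b then u else 0%nat) = if b then INR u else 0.
Proof. by case: b. Qed.

Lemma INR_bool (b : bool) : INR (nat_of_bool b) = if b then 1 else 0.
Proof. by case: b. Qed.

Lemma cnt_bound (P : pred (seq nat)) (m : nat) : INR (count P (comps m)) <= 2 ^ m.
Proof. rewrite -INR_expn2; apply: le_INR; apply/leP; exact: count_comps_le. Qed.

Lemma p24 (m : nat) : 2 ^ m <= 4 ^ m.
Proof. apply: pow_incr; lra. Qed.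

Lemma ex_cnt (f : nat -> nat) (x : R) : Rabs x < /16 -> (forall m, INR (f m) <= 2 ^ m) ->
  ex_series (fun m => INR (f m) * x ^ m).
Proof.
move=> Hx Hf; apply: (ex_PS (A := 1)) => // m; rewrite Rabs_pos_eq ?Rmult_1_l; last exact: pos_INR.
apply: Rle_trans (Hf m) (p24 m).
Qed.

Lemma ex_cnt_shift (f : nat -> nat) (k : nat) (x : R) : Rabs x < /16 ->
  (forall m, INR (f m) <= 2 ^ m) ->
  ex_series (fun m => (if (k <= m)%nat then INR (f (m - k)%nat) else 0) * x ^ m).
Proof.
move=> Hx Hf; apply: (ex_PS (A := 1)) => // m; rewrite Rmult_1_l.
case: ifP => _; last by rewrite Rabs_R0; apply: pow_le; lra.
rewrite Rabs_pos_eq; last exact: pos_INR.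
apply: Rle_trans (Hf _) _; apply: Rle_trans (p24 m).
apply: Rle_pow; [lra| apply/leP; exact: leq_subr].
Qed.

Lemma small_pow (x : R) (i : nat) : Rabs x < /16 -> Rabs (x ^ i.+1) <= (/16) ^ i /\ Rabs (x ^ i.+1) < /16.
Proof.
move=> Hx; rewrite -RPow_abs /=.
have h0 : 0 <= Rabs x by apply: Rabs_pos.
have h1 : Rabs x ^ i <= (/16) ^ i by apply: pow_incr; lra.
have h2 : (/16) ^ i <= 1 by rewrite -(pow1 i); apply: pow_incr; lra.
have h3 : 0 <= Rabs x ^ i by apply: pow_le.
split; nra.
Qed.

Lemma rat_bounds (y : R) : Rabs y < /16 ->
  Rabs (y / (1 + y) ^ 2) <= 4 * Rabs y /\ Rabs (y ^ 2 / (1 + y)) <= 2 * Rabs y.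
Proof.
move=> Hy; have [Hl Hu] := Rabs_def2 _ _ Hy.
have h : 15/16 <= 1 + y by lra.
have hp : 0 < 1 + y by lra.
split.
- rewrite Rabs_mult Rabs_inv (Rabs_pos_eq ((1 + y) ^ 2)); last by apply: pow_le; lra.
  have : / (1 + y) ^ 2 <= 4.
    rewrite -(Rinv_inv 4); apply: Rinv_le_contravar; first lra.
    rewrite /= Rmult_1_r; nra.
  have := Rabs_pos y; have : 0 < / (1 + y) ^ 2 by apply: Rinv_0_lt_compat; apply: pow_lt.
  nra.
- rewrite Rabs_mult Rabs_inv (Rabs_pos_eq (1 + y)); last lra.
  have : / (1 + y) <= 2.
    rewrite -(Rinv_inv 2); apply: Rinv_le_contravar; lra.
  rewrite -RPow_abs /=; have := Rabs_pos y.
  have : 0 < / (1 + y) by apply: Rinv_0_lt_compat.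
  move: Hy; set t := Rabs y => Hy h1 h2 h3; nra.
Qed.

Theorem corollary5p4 :
  exists r : R, (0 < r)%R /\
  forall x : R, (Rabs x < r)%R ->
    ex_series (cc_gf_term x) /\
    Series (cc_gf_term x) =
      (Series (fun i => x ^ i.+1 / (1 + x ^ i.+1) ^ 2)
         / (1 - Series (fun i => x ^ i.+1 / (1 + x ^ i.+1)))
       + Series (fun i => x ^ (2 * i.+1) / (1 + x ^ i.+1)))%R.
Proof.
exists (/16); split; first lra.
move=> x Hx.
pose Bs a := Series (fun m => INR (Bt m a) * x ^ m).
pose Cs := Series (fun m => INR (Cn m) * x ^ m).
pose Ds a := Series (fun m => INR (Dt m a) * x ^ m).
have exB : forall a, ex_series (fun m => INR (Bt m a) * x ^ m).
  by move=> a; apply: ex_cnt => // m; apply: cnt_bound.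
have exD : forall a, ex_series (fun m => INR (Dt m a) * x ^ m).
  by move=> a; apply: ex_cnt => // m; apply: cnt_bound.
have exC : ex_series (fun m => INR (Cn m) * x ^ m).
  by apply: ex_cnt => // m; apply: cnt_bound.
have exd : ex_series (fun m => (if (m == 0)%nat then 1 else 0) * x ^ m).
  by exists 1; apply: is_series_delta0.
have Sd : Series (fun m => (if (m == 0)%nat then 1 else 0) * x ^ m) = 1.
  by apply: is_series_unique; apply: is_series_delta0.
have E2 : forall a, (0 < a)%nat -> Bs a + x ^ a * Bs a = 1 + Cs.
  move=> a Ha.
  have H : Series (fun m => INR (Bt m a) * x ^ m + (if (a <= m)%nat then INR (Bt (m - a)%nat a) else 0) * x ^ m)
         = Series (fun m => (if (m == 0)%nat then 1 else 0) * x ^ m + INR (Cn m) * x ^ m).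
    apply: Series_ext => m; have := rec2 m Ha; move/(f_equal INR).
    rewrite !INR_addn INR_if INR_bool => HH; by rewrite -!Rmult_plus_distr_r HH.
  have exS : ex_series (fun m => (if (a <= m)%nat then INR (Bt (m - a)%nat a) else 0) * x ^ m).
    by apply: (ex_cnt_shift (f := fun m => Bt m a)) => // m; apply: cnt_bound.
  rewrite (Series_plus _ _ (exB a) exS) (Series_plus _ _ exd exC) Sd in H.
  by rewrite (PS_shift (fun m => INR (Bt m a))) in H.
have E3 : forall a, (0 < a)%nat -> Ds a + x ^ a * Ds a + 1 = Bs a.
  move=> a Ha.
  have H : Series (fun m => INR (Dt m a) * x ^ m + (if (a <= m)%nat then INR (Dt (m - a)%nat a) else 0) * x ^ m
                  + (if (m == 0)%nat then 1 else 0) * x ^ m)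
         = Series (fun m => INR (Bt m a) * x ^ m).
    apply: Series_ext => m; have := rec3 m Ha; move/(f_equal INR).
    rewrite !INR_addn INR_if INR_bool => HH; by rewrite -!Rmult_plus_distr_r HH.
  have exS : ex_series (fun m => (if (a <= m)%nat then INR (Dt (m - a)%nat a) else 0) * x ^ m).
    by apply: (ex_cnt_shift (f := fun m => Dt m a)) => // m; apply: cnt_bound.
  have exP := ex_series_plus _ _ (exD a) exS.
  rewrite (Series_plus _ _ exP exd) (Series_plus _ _ (exD a) exS) Sd in H.
  by rewrite (PS_shift (fun m => INR (Dt m a))) in H.
have IC := @ps_interchange (fun (m a : nat) => Bt m a) x.
have IC' : is_series (fun a => x ^ a.+1 * Bs a.+1) Cs.
  have HC : forall m a, INR (Bt m a) <= 2 * 2 ^ m.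
    move=> m a; have := cnt_bound (path neqr a) m; have : 0 <= 2 ^ m by apply: pow_le; lra. rewrite /Bt; lra.
  have := IC HC Hx; congr is_series.
  by apply: Series_ext => n; rewrite -rec1.
have IS := @ps_interchange (fun (m a : nat) => ((m == 0) + Dt m a)%nat) x.
have IS' : is_series (fun a => x ^ a.+1 * (1 + Ds a.+1)) (Series (cc_gf_term x)).
  have HC : forall m a, INR ((m == 0) + Dt m a)%nat <= 2 * 2 ^ m.
    move=> m a; rewrite INR_addn INR_bool /Dt.
    have := cnt_bound (fun w => path neqr a w && (last a w != a)) m.
    have : 1 <= 2 ^ m by apply: pow_R1_Rle; lra. case: (m == 0)%nat; lra.
  have := IS HC Hx; congr is_series.
    apply: functional_extensionality => a; congr (_ * _).
    rewrite -Sd /Ds -Series_plus //; apply: Series_ext => m.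
    by rewrite INR_addn INR_bool Rmult_plus_distr_r.
  by apply: Series_ext => n; rewrite /cc_gf_term cc_count_eq.
have exS : ex_series (cc_gf_term x).
  apply: ex_cnt => // m; rewrite /cc_count count_compositions_of //; exact: cnt_bound.
split=> //.
have Hy : forall i, Rabs (x ^ i.+1) <= (/16) ^ i /\ Rabs (x ^ i.+1) < /16.
  by move=> i; apply: small_pow.
have Hnz : forall i, 1 + x ^ i.+1 <> 0.
  move=> i; have [_ h] := Hy i; have [h1 h2] := Rabs_def2 _ _ h; lra.
have sq : forall i, x ^ (2 * i.+1) = (x ^ i.+1) ^ 2.
  move=> i; rewrite (_ : (2 * i.+1)%nat = Nat.mul i.+1 2); last by rewrite mulnC.
  exact: pow_mult.
pose K := 1 + Cs.
have hB : forall i, Bs i.+1 = K / (1 + x ^ i.+1).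
  move=> i; have := E2 i.+1 (ltn0Sn i); rewrite /K => <-; field; exact: Hnz.
have hD : forall i, x ^ i.+1 * (1 + Ds i.+1) =
   K * (x ^ i.+1 / (1 + x ^ i.+1) ^ 2) + x ^ (2 * i.+1) / (1 + x ^ i.+1).
  move=> i; have := E3 i.+1 (ltn0Sn i); rewrite hB sq => HH.
  have h := Hnz i.
  have -> : Ds i.+1 = (K / (1 + x ^ i.+1) - 1) / (1 + x ^ i.+1).
    rewrite -HH; field; exact: h.
  field; exact: h.
have exu : ex_series (fun i => x ^ i.+1 / (1 + x ^ i.+1) ^ 2).
  apply: (ex_series_le _ (fun i => 4 * (/16) ^ i)).
    move=> i; rewrite norm_R; have [h1 h2] := Hy i.
    have [h3 _] := rat_bounds h2; lra.
  apply: (ex_series_scal_l 4); apply: ex_series_geom; rewrite Rabs_pos_eq; lra.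
have exv : ex_series (fun i => x ^ (2 * i.+1) / (1 + x ^ i.+1)).
  apply: (ex_series_le _ (fun i => 2 * (/16) ^ i)).
    move=> i; rewrite norm_R sq; have [h1 h2] := Hy i.
    have [_ h3] := rat_bounds h2; lra.
  apply: (ex_series_scal_l 2); apply: ex_series_geom; rewrite Rabs_pos_eq; lra.
have CG : Cs = K * Series (fun i => x ^ i.+1 / (1 + x ^ i.+1)).
  rewrite -(is_series_unique _ _ IC') -Series_scal_l; apply: Series_ext => i.
  rewrite hB; field; exact: Hnz.
have SE : Series (cc_gf_term x) =
   K * Series (fun i => x ^ i.+1 / (1 + x ^ i.+1) ^ 2)
   + Series (fun i => x ^ (2 * i.+1) / (1 + x ^ i.+1)).
  rewrite -(is_series_unique _ _ IS') -Series_scal_l -Series_plus //; last first.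
    by apply: (ex_series_scal_l K).
  by apply: Series_ext => i; rewrite hD.
have KG : K * (1 - Series (fun i => x ^ i.+1 / (1 + x ^ i.+1))) = 1.
  by rewrite Rmult_minus_distr_l -CG /K; ring.
have nz : 1 - Series (fun i => x ^ i.+1 / (1 + x ^ i.+1)) <> 0.
  by move=> h; rewrite h Rmult_0_r in KG; lra.
rewrite SE; set G := Series (fun i => x ^ i.+1 / (1 + x ^ i.+1)) in KG nz *.
have -> : K = / (1 - G).
  by apply: (Rmult_eq_reg_r (1 - G)) => //; rewrite KG Rinv_l.
by rewrite /Rdiv Rmult_comm.
Qed.
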